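(* Let $k\ge2$, $n\ge1$, $A=\{0<1<\cdots<k-1\}$, and let $M$ be a de Bruijn set of span $n$ over $A$. Then $M$ contains a necklace of length at least $n$.
   Context: A word is primitive if not a proper power of another word; a necklace is the set of conjugates ($xy\sim yx$) of a primitive word, and its length is the length of its words. A multiset $M=\{n_{1},\dots,n_{t}\}$ of necklaces is a de Bruijn set of span $n$ over $A$ if $|n_{1}|+\cdots+|n_{t}|=k^{n}$ and every word of $A^{n}$ is a prefix of some power of some word belonging to one of the $n_{i}$. *)

(* Defs.v *)
(* Words over A = 'I_k are sequences; the alphabet order
   0<1<...<k-1 is the natural order of 'I_k (not needed for the statement). *)
From mathcomp Require Import all_boot.
Set Implicit Arguments. Unset Strict Implicit. Unset Printing Implicit Defensive.

Section Words.
Variable T : eqType.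

Definition wpow (u : seq T) (m : nat) : seq T := flatten (nseq m u).

Definition primitive (w : seq T) : Prop :=
  w <> [::] /\ forall (u : seq T) (m : nat), 2 <= m -> w <> wpow u m.

Definition conjugate (u v : seq T) : Prop :=
  exists x y : seq T, u = x ++ y /\ v = y ++ x.

(* A necklace is represented by a primitive word u; the words belonging to it
   are the conjugates of u, and its length is size u. *)
Definition in_necklace (u v : seq T) : Prop := conjugate u v.
End Words.

(* M : a multiset (list, with repetitions) of necklaces, each given by a
   primitive representative word. *)
Definition de_bruijn_set (k n : nat) (M : seq (seq 'I_k)) : Prop :=
  [/\ forall u, u \in M -> primitive u,
      sumn (map size M) = k ^ n &
      forall w : seq 'I_k, size w = n ->
        exists2 u, u \in M &
          exists v, in_necklace u v /\ exists m, prefix w (wpow v m)].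

(* Main.v *)
Require Import Defs.
From mathcomp Require Import all_boot.
From mathcomp Require Import zify.

Lemma nth_wpow (T : eqType) (x0 : T) (v : seq T) m i :
  i < size v * m -> nth x0 (wpow v m) i = nth x0 v (i %% size v).
Proof.
elim: m i => [|m IH] i; first by rewrite muln0.
move=> Hi.
have -> : wpow v m.+1 = v ++ wpow v m by [].
rewrite nth_cat; case: ltnP => Hip.
  by rewrite modn_small.
rewrite IH; last by rewrite mulnS in Hi; lia.
by rewrite -{2}(subnK Hip) modnDr.
Qed.

Lemma size_wpow (T : eqType) (v : seq T) m : size (wpow v m) = size v * m.
Proof.
elim: m => [|m IH]; first by rewrite muln0.
by rewrite /wpow /= size_cat -/(wpow v m) IH mulnS.
Qed.

Theorem lemma3p3 (k n : nat) (M : seq (seq 'I_k)) :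
  2 <= k -> 1 <= n -> de_bruijn_set n M ->
  exists2 u, u \in M & n <= size u.
Proof.
move=> Hk Hn [Hprim _ Hcov].
have k0 : 0 < k by lia.
have k1 : 1 < k by lia.
pose w := rcons (nseq n.-1 (Ordinal k0)) (Ordinal k1).
have Hw : size w = n by rewrite size_rcons size_nseq; lia.
have [u Hu [v [[x [y [Eu Ev]]] [m Hpre]]]] := Hcov w Hw.
subst u v.
exists (x ++ y) => //.
rewrite leqNgt; apply/negP => Hlt.
move/prefixP: Hpre => [s2 Hs].
set p := size (y ++ x).
have Hp : size (y ++ x) < n by rewrite !size_cat in Hlt *; lia.
have Hsz : n <= size (wpow (y ++ x) m) by rewrite Hs size_cat Hw; lia.
rewrite size_wpow in Hsz.
have E : forall i, i < n -> nth (Ordinal k0) w i = nth (Ordinal k0) (y ++ x) (i %% p).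
  move=> i Hi; rewrite -(@nth_wpow _ _ _ m); last by rewrite /p; lia.
  by rewrite Hs nth_cat Hw Hi.
have E1 := E n.-1 ltac:(lia).
have E2 := E (n.-1 - p) ltac:(lia).
have Hmod : (n.-1 - p) %% p = n.-1 %% p.
  by rewrite -{2}(@subnK p n.-1) ?modnDr //; rewrite /p; lia.
rewrite Hmod -E1 in E2.
move: E2; rewrite /w !nth_rcons size_nseq.
have p0 : 0 < p.
  rewrite /p size_cat addnC -size_cat lt0n size_eq0; apply/eqP.
  by case: (Hprim _ Hu).
have -> : n.-1 - p < n.-1 by lia.
rewrite ltnn eqxx nth_nseq.
by case: ifP => // _ /(congr1 val).
Qed.
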